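(* Let $W,M$ be disjoint with $|W|=|M|=n$, and let $\succ_W\in\mathcal F(W,M)$ and $\succ_M\in\mathcal F(M,W)$. Every algorithm for finding a stable marriage, or for verifying the stability of a marriage (when given as input a marriage that is stable with respect to $\succ_W,\succ_M$), that performs only pairwise-comparison queries onto $W$ (and arbitrary queries onto $M$), performs, on input $\succ_W,\succ_M$, at least as many queries onto $W$ as the men-proposing deferred-acceptance algorithm performs on input $\succ_W,\succ_M$.
   Context: $\mathcal F(W,M)$ is the set of profiles assigning each woman a total order on $M$; $\mathcal F(M,W)$ analogously for men. A perfect marriage is a bijection between $W$ and $M$; a pair $(w,m)$ is blocking for $\mu$ if $w$ prefers $m$ to her spouse in $\mu$ and $m$ prefers $w$ to his spouse in $\mu$; $\mu$ is stable if it has no blocking pair. A pairwise-comparison query onto $W$ asks whether $m\succ_w m'$ for given $w\in W$, $m,m'\in M$. The men-proposing deferred-acceptance algorithm: initially everyone is provisionally single. While some man is provisionally single, pick an arbitrary provisionally single man $m$; he proposes to the highest-ranked woman $w$ on his list who has not yet rejected him. If $w$ is provisionally single, $m$ and $w$ become provisionally married. Otherwise $w$ is provisionally married to some $m'$, and one pairwise-comparison query onto $w$ is made: if $m\succ_w m'$, $w$ rejects $m'$ (who becomes provisionally single) and becomes provisionally married to $m$; else $w$ rejects $m$. When no man is provisionally single, the provisional couples form the output. (All runs on a given input make the same number of queries onto $W$.) *)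

(* Defs.v *)
From mathcomp Require Import all_boot.
Set Implicit Arguments. Unset Strict Implicit. Unset Printing Implicit Defensive.

(* A strict total order (the paper's "total order", read strictly). *)
Definition strict_total (T : finType) (r : rel T) : Prop :=
  [/\ irreflexive r, transitive r & forall x y, x != y -> r x y || r y x].

(* Profiles: pW w m m'  means  m >_w m' ;  pM m w w'  means  w >_m w'. *)
Definition profile (A B : finType) (p : A -> rel B) : Prop :=
  forall a, strict_total (p a).

Section Marriage.
Variables (W M : finType) (pW : W -> rel M) (pM : M -> rel W).

(* A perfect marriage: a bijection W -> M (injective, with |W| = |M|). *)
Definition perfect (mu : W -> M) : Prop := injective mu.

Definition blocking (mu : W -> M) (w : W) (m : M) : bool :=
  pW w m (mu w) && [exists w', (mu w' == m) && pM m w w'].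

Definition stable (mu : W -> M) : Prop :=
  perfect mu /\ forall w m, ~~ blocking mu w m.

(* Men-proposing deferred acceptance, counting queries onto W.
   eng w = Some m : w provisionally married to m;
   rej m : set of women who have rejected m.
   The provisionally single man chosen is the first one in enum order
   (all runs make the same number of queries onto W). *)
Fixpoint da_loop (fuel : nat) (eng : W -> option M) (rej : M -> {set W})
    (cnt : nat) : nat :=
  match fuel with
  | 0 => cnt
  | fuel'.+1 =>
    match [pick m | [forall w, eng w != Some m]] with
    | None => cnt
    | Some m =>
      match [pick w | (w \notin rej m) &&
               [forall w', ((w' \notin rej m) && (w' != w)) ==> pM m w w']] with
      | None => cnt
      | Some w =>
        let eng' := fun x => if x == w then Some m else eng x in
        match eng w with
        | None => da_loop fuel' eng' rej cnt
        | Some m' =>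
          if pW w m m' then
            da_loop fuel' eng'
              (fun x => if x == m' then w |: rej x else rej x) cnt.+1
          else
            da_loop fuel' eng
              (fun x => if x == m then w |: rej x else rej x) cnt.+1
        end
      end
    end
  end.

(* Each iteration is one proposal; there are at most |M|*|W| proposals. *)
Definition da_queries : nat :=
  da_loop (#|M| * #|W|).+1 (fun _ => None) (fun _ => set0) 0.

End Marriage.

(* Adaptive algorithms querying W only through pairwise comparisons:
   decision trees whose internal nodes are the query "m >_w m' ?". *)
Inductive qtree (W M A : Type) : Type :=
| Leaf of A
| Query of W & M & M & qtree W M A & qtree W M A.
Arguments Leaf {W M A}.
Arguments Query {W M A}.

Fixpoint qout (W M A : Type) (pW : W -> M -> M -> bool) (t : qtree W M A) : A :=
  match t with
  | Leaf a => a
  | Query w m m' t1 t2 => if pW w m m' then qout pW t1 else qout pW t2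
  end.

Fixpoint qcount (W M A : Type) (pW : W -> M -> M -> bool) (t : qtree W M A) : nat :=
  match t with
  | Leaf _ => 0
  | Query w m m' t1 t2 => (if pW w m m' then qcount pW t1 else qcount pW t2).+1
  end.

(* An algorithm may query M arbitrarily (and for free): it is modelled as a
   function of the men's profile returning a W-query decision tree. *)
Definition finder (W M : finType) := (M -> rel W) -> qtree W M (W -> M).
Definition verifier (W M : finType) := (M -> rel W) -> (W -> M) -> qtree W M bool.

Definition finds_stable (W M : finType) (A : finder W M) : Prop :=
  forall pW pM, profile pW -> profile pM -> stable pW pM (qout pW (A pM)).

Definition verifies_stable (W M : finType) (V : verifier W M) : Prop :=
  forall pW pM (mu : W -> M), profile pW -> profile pM -> perfect mu ->
    (qout pW (V pM mu) <-> stable pW pM mu).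

(* Main.v *)
Require Import Defs.
From mathcomp Require Import all_boot.
From Stdlib Require List.
Set Implicit Arguments. Unset Strict Implicit. Unset Printing Implicit Defensive.

Fixpoint qpath (W M A : Type) (pW : W -> M -> M -> bool) (t : qtree W M A)
  : seq (W * M * M) :=
  match t with
  | Leaf _ => [::]
  | Query w m m' t1 t2 => (w, m, m') :: (if pW w m m' then qpath pW t1 else qpath pW t2)
  end.

Lemma size_qpath (W M A : Type) (pW : W -> M -> M -> bool) (t : qtree W M A) :
  size (qpath pW t) = qcount pW t.
Proof. by elim: t => [a|w m m' t1 IH1 t2 IH2] //=; case: (pW w m m'); rewrite ?IH1 ?IH2. Qed.

Lemma qout_agree (W M A : Type) (pW pW' : W -> M -> M -> bool) (t : qtree W M A) :
  (forall q, List.In q (qpath pW t) -> pW' q.1.1 q.1.2 q.2 = pW q.1.1 q.1.2 q.2) ->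
  qout pW' t = qout pW t.
Proof.
elim: t => [a|w m m' t1 IH1 t2 IH2] //= H.
have -> : pW' w m m' = pW w m m' by apply: (H (w, m, m')); left.
by case: (pW w m m') H => H; [apply: IH1 | apply: IH2] => q Hq; apply: H; right.
Qed.

Lemma sep_lemma (M : finType) (E : seq (M * M)) :
  forall (X S : {set M}), size E + #|X| < #|S| ->
  exists C : {set M}, (forall e, e \in E -> (e.1 \in C) = (e.2 \in C)) /\
    (forall x, x \in X -> x \notin C) /\ exists2 y, y \in S & y \in C.
Proof.
elim: E => [|e E IH] X S /= H.
  have : ~~ (S \subset X).
    by apply/negP => /subset_leq_card; rewrite leqNgt H.
  case/subsetPn => y yS yX; exists [set y]; split => // ; split.
    by move=> x xX; rewrite in_set1; apply/eqP => Exy; move: yX; rewrite -Exy xX.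
  by exists y; rewrite // in_set1.
have H1 : size E + #|e.1 |: X| < #|S|.
  by rewrite cardsU1; case: (e.1 \in X) H => /=; rewrite ?add0n ?addSn ?addnS => H; apply: leq_ltn_trans H; rewrite ?leqnSn.
have H2 : size E + #|e.2 |: X| < #|S|.
  by rewrite cardsU1; case: (e.2 \in X) H => /=; rewrite ?add0n ?addSn ?addnS => H; apply: leq_ltn_trans H; rewrite ?leqnSn.
case: (IH _ _ H1) => C1 [cl1 [d1 [y1 y1S y1C]]].
case: (IH _ _ H2) => C2 [cl2 [d2 [y2 y2S y2C]]].
have e1C1 : e.1 \notin C1 by apply: d1; rewrite setU11.
have e2C2 : e.2 \notin C2 by apply: d2; rewrite setU11.
case E2C1: (e.2 \in C1).
  case E1C2: (e.1 \in C2).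
    exists (C1 :|: C2); split.
      move=> f; rewrite in_cons => /orP [/eqP ->|fE]; first by rewrite !inE E2C1 E1C2 orbT.
      by rewrite !inE (cl1 f fE) (cl2 f fE).
    split; last by exists y1; rewrite // inE y1C.
    move=> x xX; rewrite inE negb_or; apply/andP; split.
      by apply: d1; rewrite inE xX orbT.
    by apply: d2; rewrite inE xX orbT.
  exists C2; split.
    move=> f; rewrite in_cons => /orP [/eqP ->|fE]; first by rewrite E1C2 (negbTE e2C2).
    exact: cl2.
  split; last by exists y2.
  by move=> x xX; apply: d2; rewrite inE xX orbT.
exists C1; split.
  move=> f; rewrite in_cons => /orP [/eqP ->|fE]; first by rewrite E2C1 (negbTE e1C1).
  exact: cl1.
split; last by exists y1.
by move=> x xX; apply: d1; rewrite inE xX orbT.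
Qed.

Definition lift_ord (M : finType) (C : {set M}) (r : rel M) : rel M :=
  fun x z => if (x \in C) == (z \in C) then r x z else x \in C.

Lemma lift_ord_st (M : finType) (C : {set M}) (r : rel M) :
  strict_total r -> strict_total (lift_ord C r).
Proof.
case=> irr tr tot; split.
- by move=> x; rewrite /lift_ord eqxx irr.
- move=> y x z; rewrite /lift_ord.
  case: (x \in C); case: (y \in C); case: (z \in C) => //=; exact: tr.
- move=> x y /tot; rewrite /lift_ord eq_sym.
  by case: (x \in C); case: (y \in C).
Qed.

Lemma size_sum_cnt (W T : finType) (f : T -> W) (s : seq T) :
  size s = \sum_(w : W) count (fun q => f q == w) s.
Proof.
elim: s => [|q s IH] /=; first by rewrite big1.
rewrite big_split /= -IH (bigD1 (f q)) //= eqxx big1 ?addn0 // => w.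
by rewrite eq_sym => /negbTE ->.
Qed.

Section DA.
Variables (W M : finType) (pW : W -> rel M) (pM : M -> rel W).
Hypotheses (HpW : profile pW) (HpM : profile pM) (hcard : #|W| = #|M|).

Definition Rej (rej : M -> {set W}) (w : W) : {set M} := [set m | w \in rej m].
Definition sumRej (rej : M -> {set W}) := \sum_(w : W) #|Rej rej w|.

Definition Inv (eng : W -> option M) (rej : M -> {set W}) : Prop :=
  [/\ forall w m, eng w = Some m -> w \notin rej m,
      forall w m, w \in rej m -> eng w != None,
      forall mu, stable pW pM mu -> forall w m, w \in rej m -> mu w != m &
      forall m w w', (w \in rej m \/ eng w = Some m) -> pM m w' w -> w' \in rej m].

Lemma surj_stable (pW0 : W -> rel M) mu : stable pW0 pM mu -> forall m, exists w, mu w = m.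
Proof.
move=> [inj _] m.
have : m \in codom mu by apply: inj_card_onto => //; rewrite hcard.
by case/codomP => w ->; exists w.
Qed.

Lemma inrej (rej : M -> {set W}) m0 w0 x w1 :
  (w1 \in (if x == m0 then w0 |: rej x else rej x)) = ((x == m0) && (w1 == w0)) || (w1 \in rej x).
Proof. by case: (x == m0); rewrite ?in_setU1. Qed.

Lemma sumRej_add (rej : M -> {set W}) m0 w0 : w0 \notin rej m0 ->
  sumRej (fun x => if x == m0 then w0 |: rej x else rej x) = (sumRej rej).+1.
Proof.
move=> H; rewrite /sumRej (bigD1 w0) //= [in RHS](bigD1 w0) //=.
have -> : Rej (fun x => if x == m0 then w0 |: rej x else rej x) w0 = m0 |: Rej rej w0.
  by apply/setP => x; rewrite !inE inrej eqxx andbT.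
rewrite cardsU1 inE H /= addSn add0n; congr (_ + _).+1.
apply: eq_bigr => w1 Hw1.
have -> : Rej (fun x => if x == m0 then w0 |: rej x else rej x) w1 = Rej rej w1 => //.
by apply/setP => x; rewrite !inE inrej (negbTE Hw1) andbF.
Qed.

Lemma block_contra mu w m w2 : stable pW pM mu -> pW w m (mu w) -> mu w2 = m -> pM m w w2 -> False.
Proof.
move=> [_ Hst] H1 H2 H3; have := Hst w m; rewrite /blocking H1 /=.
by move/negP; apply; apply/existsP; exists w2; rewrite H2 eqxx H3.
Qed.

Lemma da_inv fuel : forall eng rej cnt, Inv eng rej -> cnt = sumRej rej ->
  exists eng' rej', Inv eng' rej' /\ da_loop pW pM fuel eng rej cnt = sumRej rej'.
Proof.
elim: fuel => [|fuel IH] eng rej cnt Hinv Hcnt /=; first by exists eng, rej.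
case: pickP => [m /forallP Hs|_]; last by exists eng, rej.
case: pickP => [w /andP[Hw /forallP Hb]|_]; last by exists eng, rej.
case: (HpM m) => irrm trm totm.
have best : forall w', pM m w' w -> w' \in rej m.
  move=> w' H'; apply/negPn/negP => Hn; have := Hb w'; rewrite Hn /=.
  case: eqP => [Ew|_] /=; first by move: H'; rewrite Ew irrm.
  by move=> H2; have := trm _ _ _ H' H2; rewrite irrm.
case: Hinv => Ha Hbb Hc Hd.
case Heng: (eng w) => [m'|].
- have mm' : m' != m by apply/eqP => E; have := Hs w; rewrite Heng E eqxx.
  case Hq: (pW w m m').
  + apply: IH; last by rewrite sumRej_add ?Hcnt //; apply: Ha.
    split.
    * move=> x m1; case: (eqVneq x w) => [->|xw] E.
        by case: E => <-; rewrite inrej eq_sym (negbTE mm') /=.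
      by rewrite inrej (negbTE xw) andbF /=; apply: Ha.
    * move=> x m1; rewrite inrej; case: (eqVneq x w) => // xw.
      by rewrite andbF /=; apply: Hbb.
    * move=> mu Hst x m1; rewrite inrej => /orP [/andP[/eqP -> /eqP ->]|]; last by apply: Hc.
      apply/eqP => Hmuw; case: (surj_stable Hst m) => w2 Hw2.
      have w2w : w != w2 by apply/eqP => E; move: mm'; rewrite -Hmuw E Hw2 eqxx.
      case/orP: (totm _ _ w2w) => H.
        by apply: (block_contra Hst _ Hw2 H); rewrite Hmuw.
      by move: (Hc mu Hst _ _ (best _ H)); rewrite Hw2 eqxx.
    * move=> m1 w0 w' H H'; rewrite inrej; apply/orP; right.
      case: H => [|].
        rewrite inrej => /orP [/andP[/eqP E1 /eqP E2]|H]; last by apply: Hd H'; left.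
        by subst; apply: Hd H'; right.
      case: eqP => [E0 [E1]|_ E]; first by subst; exact: best.
      by apply: Hd H'; right.
  + apply: IH; last by rewrite sumRej_add ?Hcnt.
    split.
    * move=> x m1 E; rewrite inrej.
      have : m1 != m by apply/eqP => E1; have := Hs x; rewrite E E1 eqxx.
      by move/negbTE => ->; rewrite /=; apply: Ha.
    * move=> x m1; rewrite inrej => /orP [/andP[_ /eqP ->]|]; first by rewrite Heng.
      exact: Hbb.
    * move=> mu Hst x m1; rewrite inrej => /orP [/andP[/eqP -> /eqP ->]|]; last by apply: Hc.
      apply/eqP => Hmuw.
      case: (HpW w) => _ _ totw.
      have Hq' : pW w m' m by move: (totw _ _ mm'); rewrite Hq orbF.
      case: (surj_stable Hst m') => w3 Hw3.
      have w3w : w != w3 by apply/eqP => E; move: mm'; rewrite -Hw3 -E Hmuw eqxx.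
      case: (HpM m') => _ _ totm'.
      case/orP: (totm' _ _ w3w) => H.
        by apply: (block_contra Hst _ Hw3 H); rewrite Hmuw.
      by move: (Hc mu Hst _ _ (Hd _ _ _ (or_intror Heng) H)); rewrite Hw3 eqxx.
    * move=> m1 w0 w' H H'; rewrite inrej; apply/orP; right.
      case: H => [|E]; last by apply: Hd H'; right.
      rewrite inrej => /orP [/andP[/eqP E1 /eqP E2]|H]; last by apply: Hd H'; left.
      by subst; apply: best.
- apply: IH => //; split.
  * move=> x m1; case: eqP => [->|_ E]; last exact: Ha.
    by case => <-.
  * by move=> x m1 H; case: (x == w) => //; apply: Hbb H.
  * exact: Hc.
  * move=> m1 w0 w' H H'; case: H => [H|]; first by apply: Hd H'; left.
    case: eqP => [E0 [E1]|_ E]; first by subst; exact: best.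
    by apply: Hd H'; right.
Qed.

Lemma da_final : exists eng rej, Inv eng rej /\ da_queries pW pM = sumRej rej.
Proof.
apply: da_inv; last by rewrite /sumRej big1 // => w _; apply/eqP; rewrite cards_eq0; apply/eqP/setP => m; rewrite !inE.
split.
- by [].
- by move=> w m /=; rewrite in_set0.
- by move=> mu _ w m /=; rewrite in_set0.
- by move=> m w w' /= [|//]; rewrite in_set0.
Qed.

End DA.

Lemma In_mem (T : eqType) (x : T) (s : seq T) : List.In x s -> x \in s.
Proof. elim: s => //= y s IH [->|H]; rewrite in_cons ?eqxx //; apply/orP; right; exact: IH. Qed.

Lemma key (W M : finType) (A : Type) (pW : W -> rel M) (pM : M -> rel W)
  (HpW : profile pW) (HpM : profile pM) (hcard : #|W| = #|M|)
  (t : qtree W M A) (mu : W -> M) :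
  stable pW pM mu -> qcount pW t < da_queries pW pM ->
  exists pW', profile pW' /\ qout pW' t = qout pW t /\ ~ stable pW' pM mu.
Proof.
move=> Hst Hlt.
case: (da_final HpW HpM hcard) => eng [rej [[Ha Hb Hc Hd] Hda]].
set P := qpath pW t.
have : ~~ [forall w, #|Rej rej w| <= count (fun q : W * M * M => q.1.1 == w) P].
  apply/negP => /forallP H; move: Hlt.
  rewrite Hda -size_qpath (size_sum_cnt (fun q : W * M * M => q.1.1)) /sumRej.
  have Hle : \sum_(w : W) #|Rej rej w| <= \sum_(w : W) count (fun q : W * M * M => q.1.1 == w) P.
    by apply: leq_sum => w _; apply: H.
  by rewrite ltnNge Hle.
case/forallPn => w; rewrite -ltnNge => Hw.
have /card_gt0P [m1 Hm1] : 0 < #|Rej rej w| by apply: leq_ltn_trans Hw.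
rewrite inE in Hm1.
have := Hb _ _ Hm1; case Heng: (eng w) => [m0|] // _.
have m0R : m0 \notin Rej rej w by rewrite inE; apply: Ha.
set S := m0 |: Rej rej w.
set E := [seq (q.1.2, q.2) | q <- P & q.1.1 == w].
have HS : size E + #|[set mu w]| < #|S|.
  by rewrite size_map size_filter cards1 cardsU1 m0R addn1 add1n ltnS.
case: (sep_lemma HS) => C [cl [dj [y yS yC]]].
have muwC : mu w \notin C by apply: dj; rewrite in_set1 eqxx.
have cert : forall w', mu w' = y -> w' != w -> pM y w w'.
  move=> w' Hw' ww'.
  have Hy : w \in rej y \/ eng w = Some y.
    by move: yS; rewrite in_setU1 inE => /orP [/eqP ->|]; [right|left].
  case: (HpM y) => irr tr tot.
  have ww : w != w' by rewrite eq_sym.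
  case/orP: (tot w w' ww) => // H.
  by have := Hc mu Hst _ _ (Hd _ _ _ Hy H); rewrite Hw' eqxx.
exists (fun w0 => if w0 == w then lift_ord C (pW w) else pW w0).
split.
  by move=> w0; case: (w0 == w); [apply: lift_ord_st; apply: HpW | apply: HpW].
split.
  apply: qout_agree => q Hq /=; case: eqP => [Eq|//].
  have Hin : (q.1.2, q.2) \in E.
    by apply: map_f; rewrite mem_filter Eq eqxx In_mem.
  by rewrite Eq /lift_ord (cl _ Hin) eqxx.
move=> Hst'.
case: (surj_stable hcard Hst y) => w' Hw'.
have ww' : w' != w by apply/eqP => Ew; move: muwC; rewrite -Ew Hw' yC.
apply: (block_contra Hst' _ Hw' (cert _ Hw' ww')).
by rewrite eqxx /lift_ord yC (negbTE muwC).
Qed.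

Theorem theorem30 (W M : finType) (n : nat) (hW : #|W| = n) (hM : #|M| = n)
    (pW : W -> rel M) (pM : M -> rel W)
    (HpW : profile pW) (HpM : profile pM) :
  (forall A : finder W M, finds_stable A ->
     da_queries pW pM <= qcount pW (A pM)) /\
  (forall V : verifier W M, verifies_stable V ->
     forall mu : W -> M, stable pW pM mu ->
       da_queries pW pM <= qcount pW (V pM mu)).
Proof.
have hcard : #|W| = #|M| by rewrite hW hM.
split.
  move=> A HA; rewrite leqNgt; apply/negP => Hlt.
  have Hst := HA pW pM HpW HpM.
  case: (key HpW HpM hcard Hst Hlt) => pW' [HpW' [Hout Hn]].
  by apply: Hn; rewrite -Hout; apply: HA.
move=> V HV mu Hst; rewrite leqNgt; apply/negP => Hlt.
case: (key HpW HpM hcard Hst Hlt) => pW' [HpW' [Hout Hn]].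
apply: Hn; apply/(HV pW' pM mu HpW' HpM Hst.1).
by rewrite Hout; apply/(HV pW pM mu HpW HpM Hst.1).
Qed.
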